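(* For all real numbers $t\ge1$, $s\ge e$, $c\in(0,1]$ and $0<\omega\le\delta\le e^{-e}$, $$\frac1t\ln\Big(\frac{\ln(2t)}{\omega}\Big)\ge\frac cs\ln\Big(\frac{\ln s}{\delta}\Big)\ \Longrightarrow\ t\le\frac sc\cdot\frac{\ln(2/\omega)+\ln\ln(1/(c\omega))}{\ln(1/\delta)}.$$ *)

(* Defs.v *)
From Stdlib Require Import Reals.

(* Main.v *)
Require Import Defs.
From Stdlib Require Import Reals Lra.
Open Scope R_scope.

Lemma my_ln_le x y : 0 < x -> x <= y -> ln x <= ln y.
Proof. intros hx [h|h]. left; apply ln_increasing; auto. subst; lra. Qed.

Lemma my_ln_le_sub1 x : 0 < x -> ln x <= x - 1.
Proof. intros hx. pose proof (exp_ineq1_le (ln x)). rewrite exp_ln in H; lra. Qed.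

Lemma ln_inv1 x : 0 < x -> ln (1 / x) = - ln x.
Proof. intros hx. unfold Rdiv. rewrite Rmult_1_l. apply ln_Rinv; auto. Qed.

Lemma ln_divx x y : 0 < x -> 0 < y -> ln (x / y) = ln x - ln y.
Proof. intros hx hy. unfold Rdiv. rewrite ln_mult.
  - rewrite ln_Rinv by auto; lra.
  - auto.
  - apply Rinv_0_lt_compat; auto. Qed.

Theorem lemma6 (t s c omega delta : R)
  (ht : 1 <= t) (hs : exp 1 <= s) (hc0 : 0 < c) (hc1 : c <= 1)
  (homega : 0 < omega) (hod : omega <= delta) (hdelta : delta <= exp (- exp 1)) :
  (1 / t) * ln (ln (2 * t) / omega) >= (c / s) * ln (ln s / delta) ->
  t <= (s / c) * ((ln (2 / omega) + ln (ln (1 / (c * omega)))) / ln (1 / delta)).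
Proof.
  intros H.
  assert (he : 2 < exp 1) by (pose proof (exp_ineq1 1); lra).
  assert (hd0 : 0 < delta) by lra.
  assert (hs0 : 0 < s) by lra.
  assert (ht0 : 0 < t) by lra.
  assert (hln2 : / 2 < ln 2) by apply ln_lt_2.
  assert (hln2' : ln 2 < 1).
  { rewrite <- (ln_exp 1). apply ln_increasing; lra. }
  assert (hL : exp 1 <= ln (1 / delta)).
  { rewrite ln_inv1 by lra. pose proof (my_ln_le _ _ hd0 hdelta). rewrite ln_exp in H0. lra. }
  set (L := ln (1 / delta)) in *.
  assert (hW : L <= ln (1 / omega)).
  { unfold L. rewrite !ln_inv1 by lra. pose proof (my_ln_le _ _ homega hod). lra. }
  set (W := ln (1 / omega)) in *.
  assert (hu : 0 <= ln (1 / c)).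
  { rewrite ln_inv1 by lra. pose proof (my_ln_le _ _ hc0 hc1). rewrite ln_1 in H0. lra. }
  set (u := ln (1 / c)) in *.
  assert (hM : ln (1 / (c * omega)) = u + W).
  { unfold u, W. rewrite !ln_inv1 by (try apply Rmult_lt_0_compat; lra).
    rewrite ln_mult by lra. lra. }
  rewrite hM.
  assert (hls : 1 <= ln s).
  { rewrite <- (ln_exp 1). apply my_ln_le; lra. }
  set (ls := ln s) in *.
  assert (hlnls : 0 <= ln ls).
  { rewrite <- ln_1. apply my_ln_le; lra. }
  assert (h2w : ln (2 / omega) = ln 2 + W).
  { unfold W. rewrite ln_divx, ln_inv1 by lra. lra. }
  rewrite h2w.
  assert (h2t : 0 < ln (2 * t)).
  { rewrite <- ln_1. apply ln_increasing; lra. }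
  rewrite ln_divx in H by lra.
  rewrite ln_divx in H by lra.
  replace (ln (ln (2 * t)) - ln omega) with (ln (ln (2 * t)) + W) in H by (unfold W; rewrite ln_inv1; lra).
  replace (ln ls - ln delta) with (ln ls + L) in H by (unfold L; rewrite ln_inv1; lra).
  assert (hlnM1 : 1 <= ln (u + W)).
  { rewrite <- (ln_exp 1). apply my_ln_le; lra. }
  assert (hlnM2 : ln (u + W) <= u + W - 1) by (apply my_ln_le_sub1; lra).
  set (lnM := ln (u + W)) in *.
  set (A := ln 2 + W + lnM).
  assert (hA : L <= A) by (unfold A; lra).
  assert (hL0 : 0 < L) by lra.
  assert (hAL : 1 <= A / L).
  { apply (Rmult_le_reg_r L); auto. unfold Rdiv. rewrite Rmult_assoc, Rinv_l; lra. }
  assert (hsc : s <= s / c).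
  { unfold Rdiv. rewrite <- (Rmult_1_r s) at 1. apply Rmult_le_compat_l; try lra.
    rewrite <- Rinv_1. apply Rinv_le_contravar; lra. }
  set (t0 := s / c * (A / L)).
  assert (ht0e : exp 1 <= t0).
  { unfold t0. assert (s/c * 1 <= s/c * (A/L)) by (apply Rmult_le_compat_l; lra). lra. }
  destruct (Rle_or_lt t t0) as [hle|hlt]; [exact hle|exfalso].
  set (r := t / t0).
  assert (ht00 : 0 < t0) by lra.
  assert (hr : 1 < r).
  { unfold r. apply (Rmult_lt_reg_r t0); auto. unfold Rdiv. rewrite Rmult_assoc, Rinv_l; lra. }
  assert (htr : t = t0 * r) by (unfold r; field; lra).
  set (a := ln (2 * t0)).
  assert (ha : 1 < a).
  { unfold a. rewrite <- (ln_exp 1). apply ln_increasing; lra. }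
  assert (hlr : 0 < ln r) by (rewrite <- ln_1; apply ln_increasing; lra).
  assert (hlr2 : ln r <= r - 1) by (apply my_ln_le_sub1; lra).
  assert (h2ta : ln (2 * t) = a + ln r).
  { unfold a. rewrite htr, <- ln_mult by lra. f_equal; ring. }
  assert (hlnsum : ln (a + ln r) <= ln a + ln r).
  { replace (a + ln r) with (a * (1 + ln r / a)) by (field; lra).
    rewrite ln_mult.
    2: lra.
    2: { assert (0 < ln r / a) by (apply Rdiv_lt_0_compat; lra). lra. }
    assert (ln (1 + ln r / a) <= ln r / a) by
      (pose proof (my_ln_le_sub1 (1 + ln r / a)); assert (0 < ln r / a) by (apply Rdiv_lt_0_compat; lra); lra).
    assert (ln r / a <= ln r).
    { apply (Rmult_le_reg_r a); try lra. unfold Rdiv. rewrite Rmult_assoc, Rinv_l; nra. }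
    lra. }
  assert (hlna : 0 < ln a) by (rewrite <- ln_1; apply ln_increasing; lra).
  assert (K1 : t0 * (W + ln (ln (2 * t))) < t * (W + ln a)).
  { rewrite h2ta, htr.
    assert (W + ln (a + ln r) <= W + ln a + r - 1) by lra.
    assert (0 < (r - 1) * (W + ln a - 1)) by (apply Rmult_lt_0_compat; lra).
    nra. }
  assert (hA0 : 0 < A) by lra.
  assert (hadef : a = ln 2 + ls + u + ln A - ln L).
  { unfold a, t0, ls, u. rewrite ln_mult by (try apply Rmult_lt_0_compat; try apply Rdiv_lt_0_compat; lra).
    rewrite ln_mult by (try apply Rdiv_lt_0_compat; lra).
    rewrite !ln_divx by lra. rewrite ?ln_1. lra. }
  assert (hlnL : 1 <= ln L) by (rewrite <- (ln_exp 1); apply my_ln_le; lra).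
  assert (hlnA : ln A <= A - 1) by (apply my_ln_le_sub1; lra).
  assert (ha2 : a <= 2 * ls * (u + W)).
  { assert (0 <= (ls - 1) * (2 * (u + W) - 1)) by (apply Rmult_le_pos; lra).
    assert (hAd : A = ln 2 + W + lnM) by reflexivity. ring_simplify in H0. lra. }
  assert (hlna2 : ln a <= ln 2 + ln ls + lnM).
  { unfold lnM. rewrite <- !ln_mult by lra. apply my_ln_le; lra. }
  assert (K2 : s * (W + ln a) <= c * t0 * (L + ln ls)).
  { replace (c * t0) with (s * A / L) by (unfold t0; field; lra).
    assert (L * (W + ln a) <= A * (L + ln ls)).
    { assert (L * (W + ln a) <= L * (A + ln ls)) by (apply Rmult_le_compat_l; unfold A; lra).
      assert (L * ln ls <= A * ln ls) by (apply Rmult_le_compat_r; lra). nra. }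
    apply (Rmult_le_reg_r L); auto.
    replace (s * A / L * (L + ln ls) * L) with (s * (A * (L + ln ls))) by (field; lra).
    replace (s * (W + ln a) * L) with (s * (L * (W + ln a))) by ring.
    apply Rmult_le_compat_l; lra. }
  assert (H' : c * t * (ln ls + L) <= s * (ln (ln (2 * t)) + W)).
  { apply Rge_le in H.
    apply (Rmult_le_compat_l (t * s)) in H; [|nra].
    replace (t * s * (c / s * (ln ls + L))) with (c * t * (ln ls + L)) in H by (field; lra).
    replace (t * s * (1 / t * (ln (ln (2 * t)) + W))) with (s * (ln (ln (2 * t)) + W)) in H by (field; lra).
    exact H. }
  assert (E1 : s * (t0 * (W + ln (ln (2 * t)))) < s * (t * (W + ln a))) by (apply Rmult_lt_compat_l; lra).
  assert (E2 : t * (s * (W + ln a)) <= t * (c * t0 * (L + ln ls))) by (apply Rmult_le_compat_l; lra).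
  assert (E3 : t0 * (c * t * (ln ls + L)) <= t0 * (s * (ln (ln (2 * t)) + W))) by (apply Rmult_le_compat_l; lra).
  nra.
Qed.
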